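(* Let $F,G$ be graphs with $F\to G$. Then $\mathsf{HDE}(F,G)\le |V_F|/|V_G|$, $\mathsf{HDE}(F,G)\le \mathsf{CC}(F)/\mathsf{CC}(G)$, and, if $\alpha(G)\ge1$, $\mathsf{HDE}(F,G)\le \alpha(F)/\alpha(G)$.
   Context: Graphs are finite directed graphs $G=(V_G,E_G)$ with $V_G$ nonempty finite and $E_G\subseteq V_G\times V_G$ (loops allowed). Homomorphisms are vertex maps sending edges to edges; $\hom(F,G)$ is their number and $F\to G$ means $\hom(F,G)\ge1$. $\mathsf{HDE}(F,G)=\sup\{c\in\mathbb R:\hom(F,T)\ge\hom(G,T)^c\text{ for all graphs }T\}$. $\mathsf{CC}(H)$ is the number of connected components of $H$ ignoring edge directions. $\alpha(H)$ is the maximum size of a set $I\subseteq V_H$ such that $E_H\cap (I\times I)=\emptyset$ (no edges, including loops, within $I$). *)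

(* Defs.v *)
From mathcomp Require Import all_boot.
From Stdlib Require Import Reals.

Set Implicit Arguments.
Unset Strict Implicit.
Unset Printing Implicit Defensive.

Record graph := Graph {
  vert : finType;
  edge : rel vert;
  vert_nonempty : (0 < #|vert|)%N
}.

Definition is_hom (F T : graph) (f : {ffun vert F -> vert T}) : bool :=
  [forall x, forall y, edge x y ==> edge (f x) (f y)].

Definition hom (F T : graph) : nat := #|[pred f : {ffun vert F -> vert T} | is_hom f]|.

Definition hom_to (F G : graph) : Prop := (1 <= hom F G)%N.

(* real power x^c for x >= 0, with 0^c := 0 (only the case c > 0 matters) *)
Definition rpow (x c : R) : R := if Rlt_dec 0 x then Rpower x c else 0%R.

Definition HDE_set (F G : graph) (c : R) : Prop :=
  forall T : graph, (rpow (INR (hom G T)) c <= INR (hom F T))%R.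

(* HDE(F,G) <= r  iff  r is an upper bound of HDE_set F G *)
Definition HDE_le (F G : graph) (r : R) : Prop := is_upper_bound (HDE_set F G) r.

Definition symrel (V : finType) (e : rel V) : rel V := [rel x y | e x y || e y x].
Definition CC (H : graph) : nat := n_comp (symrel (@edge H)) (vert H).

Definition alpha (H : graph) : nat :=
  \max_(I : {set vert H} | [forall x in I, forall y in I, ~~ edge x y]) #|I|.

(* Main.v *)
Require Import Defs.
From mathcomp Require Import all_boot.
From Stdlib Require Import Reals.
From Stdlib Require Import Lra Lia.

Lemma inj_le (T T': finType) (f: T->T') (A: {pred T}) (B: {pred T'}) :
  {in A &, injective f} -> (forall x, x \in A -> f x \in B) -> #|A| <= #|B|.
Proof.
move=> inj HB; rewrite -(card_in_image inj); apply: subset_leq_card.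
by apply/subsetP => y /imageP [x Ax ->]; apply: HB.
Qed.

Lemma card_setT_all (T : finType) : #|{set T}| = expn 2 #|T|.
Proof.
rewrite -cardsT -card_powerset; apply: eq_card => S.
by rewrite inE powersetE subsetT.
Qed.

Definition Kn (N : nat) : graph := @Graph ('I_N.+1) (fun _ _ => true) (ltac:(by rewrite card_ord)).

Lemma hom_Kn H N : hom H (Kn N) = expn N.+1 #|vert H|.
Proof.
have -> : expn N.+1 #|vert H| = #|{ffun vert H -> 'I_N.+1}| by rewrite card_ffun card_ord.
rewrite /hom; apply: eq_card => f.
rewrite !inE /is_hom; apply/forallP => x; apply/forallP => y; by rewrite implybT.
Qed.

Lemma connect_eqf (T:finType) (e: rel T) (U:eqType) (f: T->U) :
  (forall x y, e x y -> f x = f y) -> forall x y, connect e x y -> f x = f y.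
Proof.
move=> H x y /connectP [p]; elim: p x => [|z p IH] x /=; first by move=> _ ->.
case/andP => exz pz Hy; rewrite (H _ _ exz); exact: IH.
Qed.

Definition Loops (N : nat) : graph := @Graph ('I_N.+1) (fun x y => x == y) (ltac:(by rewrite card_ord)).

Lemma symrel_sym (V : finType) (e : rel V) : connect_sym (symrel e).
Proof.
apply: sym_connect_sym => x y; rewrite /symrel /=; exact: orbC.
Qed.

Lemma hom_Loops H N : hom H (Loops N) = expn N.+1 (CC H).
Proof.
set e := symrel (@edge H).
have sym : connect_sym e := @symrel_sym _ (@edge H).
have homc : forall f : {ffun vert H -> vert (Loops N)}, is_hom f -> forall x y, connect e x y -> f x = f y.
  move=> f hf; apply: connect_eqf => x y; rewrite /e /symrel /= => /orP [] exy.
    by move/forallP: hf => /(_ x) /forallP /(_ y) /implyP /(_ exy) /eqP.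
  by move/forallP: hf => /(_ y) /forallP /(_ x) /implyP /(_ exy) /eqP.
have -> : CC H = #|roots e| by rewrite /CC /n_comp_mem; apply: eq_card => x; rewrite !inE andbT.
have -> : expn N.+1 #|roots e| = #|pffun_on ord0 (roots e) (@predT 'I_N.+1)| by rewrite card_pffun_on card_ord.
apply/eqP; rewrite eqn_leq; apply/andP; split.
- apply: (@inj_le _ _ (fun f : {ffun vert H -> 'I_N.+1} => [ffun x => if roots e x then f x else ord0])).
    move=> f g; rewrite !inE => hf hg Hfg; apply/ffunP => x.
    rewrite (homc f hf x (root e x) (connect_root e x)) (homc g hg x (root e x) (connect_root e x)).
    move/ffunP: Hfg => /(_ (root e x)); rewrite !ffunE roots_root //.
  move=> f _; apply/pffun_onP; split; last by move=> y _.
  apply/subsetP => x; rewrite !inE ffunE; case: (roots e x) => //; by rewrite eqxx.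
- apply: (@inj_le _ _ (fun g : {ffun vert H -> 'I_N.+1} => ([ffun x => g (root e x)] : {ffun vert H -> vert (Loops N)}))).
    move=> f g /pffun_onP [Hf _] /pffun_onP [Hg _] Hfg; apply/ffunP => x.
    case Hx: (roots e x).
      move/ffunP: Hfg => /(_ x); rewrite !ffunE; by move/eqP: Hx => ->.
    have Hfx : f x = ord0.
      apply/eqP; apply/negPn/negP => Hs; move: (subsetP Hf x Hs) => HH; have : roots e x := HH; by rewrite Hx.
    have Hgx : g x = ord0.
      apply/eqP; apply/negPn/negP => Hs; move: (subsetP Hg x Hs) => HH; have : roots e x := HH; by rewrite Hx.
    by rewrite Hfx Hgx.
  move=> g _; rewrite inE /is_hom; apply/forallP => x; apply/forallP => y; apply/implyP => exy.
  rewrite !ffunE /=; apply/eqP; congr (g _); apply/eqP; rewrite root_connect //.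
  by apply: connect1; rewrite /e /symrel /= exy.
Qed.
Definition Star (N : nat) : graph :=
  @Graph ('I_N.+2) (fun x y => (x == ord0) || (y == ord0)) (ltac:(by rewrite card_ord)).

Definition indep {H : graph} (I : {set vert H}) : bool :=
  [forall x in I, forall y in I, ~~ edge x y].

Lemma expn_mono_base m n e : m <= n -> expn m e <= expn n e.
Proof.
move=> Hmn; case: e => [|e]; first by rewrite !expn0.
by rewrite leq_exp2r.
Qed.

Lemma alpha_lower G N : expn N.+1 (alpha G) <= hom G (Star N).
Proof.
have Hne : 0 < #|[pred I : {set vert G} | indep I]|.
  apply/card_gt0P; exists set0; rewrite inE /indep; apply/forallP => x; apply/implyP; by rewrite inE.
have [I HI Hmax] := eq_bigmax_cond (fun I : {set vert G} => #|I|) Hne.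
have -> : alpha G = #|I| by rewrite /alpha -Hmax.
have -> : expn N.+1 #|I| = #|pffun_on (ord0 : 'I_N.+2) I (predC1 ord0)|
  by rewrite card_pffun_on cardC1 card_ord.
apply: subset_leq_card; apply/subsetP => f /pffun_onP [Hs _].
rewrite inE /is_hom; apply/forallP => x; apply/forallP => y; apply/implyP => exy.
apply/negPn/negP; rewrite /= negb_or => /andP [fx fy].
have xI : x \in I by apply: (subsetP Hs); rewrite inE.
have yI : y \in I by apply: (subsetP Hs); rewrite inE.
move: HI; rewrite inE /indep => /forallP /(_ x) /implyP /(_ xI) /forallP /(_ y) /implyP /(_ yI).
by rewrite exy.
Qed.

Lemma alpha_upper F N :
  hom F (Star N) <= (expn 2 #|vert F| * expn 2 (alpha F)) * expn N.+1 (alpha F).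
Proof.
rewrite /hom -sum1_card.
rewrite (partition_big (fun f : {ffun vert F -> vert (Star N)} => [set x | f x != (ord0 : vert (Star N))]) predT) //=.
apply: (@leq_trans (\sum_(S : {set vert F}) expn N.+2 (alpha F))).
  apply: leq_sum => S _.
  rewrite sum1dep_card.
  case: (pickP [pred f : {ffun vert F -> vert (Star N)} | (is_hom f) && ([set x | f x != (ord0 : vert (Star N))] == S)]) => [f0 Hf0|H0]; last first.
    rewrite (_ : #|_| = 0) //; apply: eq_card0 => f; rewrite inE; exact: H0.
  move: Hf0 => /andP [hf0 /eqP HS].
  have HSi : indep S.
    rewrite /indep; apply/forallP => x; apply/implyP => xS; apply/forallP => y; apply/implyP => yS.
    rewrite -HS !inE in xS yS; apply/negP => exy.
    move/forallP: hf0 => /(_ x) /forallP /(_ y) /implyP /(_ exy) /=.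
    by rewrite (negbTE xS) (negbTE yS).
  have HSa : #|S| <= alpha F by rewrite /alpha; exact: (@leq_bigmax_cond _ (fun I : {set vert F} => indep I) (fun I => #|I|) S HSi).
  apply: (@leq_trans (expn N.+2 #|S|)); last by apply: leq_pexp2l.
  have -> : expn N.+2 #|S| = #|pffun_on (ord0 : vert (Star N)) S predT| by rewrite card_pffun_on card_ord.
  apply: subset_leq_card; apply/subsetP => f; rewrite !inE => /andP [_ /eqP HfS].
  apply/pffun_onP; split; last by move=> y _.
  apply/subsetP => x; rewrite inE -HfS inE //.
rewrite sum_nat_const card_setT_all -mulnA leq_mul2l; apply/orP; right.
rewrite -expnMn; apply: expn_mono_base; by rewrite mul2n -addnn addnS ltnS leq_addr.
Qed.
Lemma ln_le' x y : (0 < x)%R -> (x <= y)%R -> (ln x <= ln y)%R.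
Proof. intros Hx [H|H]. left; apply ln_increasing; auto. subst; lra. Qed.

Lemma INR_expn m n : INR (expn m n) = (INR m ^ n)%R.
Proof.
elim: n => [|n IH]; first by rewrite expn0.
by rewrite expnS -multE mult_INR IH.
Qed.

Lemma rpowE c x : (0 < x)%R -> rpow x c = Rpower x c.
Proof. intros Hx. unfold rpow. destruct (Rlt_dec 0 x); [reflexivity|contradiction]. Qed.

Lemma key (a b K : nat) (c : R) (hG hF : nat -> nat) :
  (0 < a)%N -> (forall N, expn N.+1 a <= hG N)%N -> (forall N, hF N <= K * expn N.+1 b)%N ->
  (forall N, rpow (INR (hG N)) c <= INR (hF N))%R -> (c <= INR b / INR a)%R.
Proof.
move=> Ha HG HF H.
have Ha' : (0 < INR a)%R by apply: lt_0_INR; apply/ltP.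
have Hb : (0 <= INR b / INR a)%R.
  apply: Rmult_le_pos; [apply: pos_INR | left; apply: Rinv_0_lt_compat; lra].
destruct (Rle_or_lt c 0) as [Hc|Hc]; first lra.
have Hpos : forall N, (INR (expn N.+1 a) <= INR (hG N))%R by move=> N; apply: le_INR; apply/leP.
have Hx : forall N, (0 < INR N.+1)%R by move=> N; apply: lt_0_INR; lia.
have HpG : forall N, (0 < INR (hG N))%R.
  move=> N; apply: (Rlt_le_trans _ _ _ _ (Hpos N)); rewrite INR_expn; exact: pow_lt.
have Hbound : forall N, (c * (INR a * ln (INR N.+1)) <= ln (INR K) + INR b * ln (INR N.+1))%R /\ (0 < INR K)%R.
  move=> N.
  have H1 := H N.
  rewrite (rpowE c _ (HpG N)) in H1.
  have H2 : (INR (hF N) <= INR K * INR N.+1 ^ b)%R.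
    rewrite -INR_expn -mult_INR multE; apply: le_INR; apply/leP; exact: HF.
  have Hrp : (0 < Rpower (INR (hG N)) c)%R by rewrite /Rpower; apply: exp_pos.
  have HK : (0 < INR K)%R.
    destruct (Rle_or_lt (INR K) 0) as [HK|HK]; last by [].
    have : (INR K * INR N.+1 ^ b <= 0)%R.
      rewrite -(Rmult_0_l (INR N.+1 ^ b)); apply: Rmult_le_compat_r; last by [].
      left; apply: pow_lt; apply: Hx.
    lra.
  split; last by [].
  have H3 : (Rpower (INR (hG N)) c <= INR K * INR N.+1 ^ b)%R by lra.
  have H4 := ln_le' _ _ Hrp H3.
  rewrite /Rpower ln_exp ln_mult // ?ln_pow // in H4; last by apply: pow_lt.
  have H5 := ln_le' _ _ _ (Hpos N). rewrite INR_expn ln_pow // in H5.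
  have H6 : (INR a * ln (INR N.+1) <= ln (INR (hG N)))%R by apply: H5; apply: pow_lt.
  apply: Rle_trans H4.
  apply: Rmult_le_compat_l; lra.
destruct (Rle_or_lt c (INR b / INR a)) as [Hc'|Hc']; first by [].
exfalso.
set d := (c * INR a - INR b)%R.
have Hd : (0 < d)%R.
  rewrite /d; apply: Rlt_Rminus.
  have := Rmult_lt_compat_r (INR a) _ _ Ha' Hc'.
  by rewrite /Rdiv Rmult_assoc Rinv_l ?Rmult_1_r; [|lra].
have [_ HK] := Hbound 0%N.
have [N HN] := INR_unbounded (exp (ln (INR K) / d)).
have [HB _] := Hbound N.
have HL : (ln (INR K) / d < ln (INR N.+1))%R.
  rewrite -[X in (X < _)%R]ln_exp; apply: ln_increasing; first exact: exp_pos.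
  rewrite S_INR; lra.
have : (ln (INR K) < d * ln (INR N.+1))%R.
  have := Rmult_lt_compat_l d _ _ Hd HL.
  by rewrite /Rdiv (Rmult_comm (ln _)) -Rmult_assoc Rinv_r ?Rmult_1_l; [|lra].
rewrite /d; nra.
Qed.

Lemma CC_pos H : 0 < CC H.
Proof.
have [x _] : exists x : vert H, true.
  by move: (vert_nonempty H) => /card_gt0P [x _]; exists x.
rewrite /CC /n_comp_mem; apply/card_gt0P; exists (root (symrel (@edge H)) x).
rewrite !inE andbT; apply: roots_root; exact: symrel_sym.
Qed.

Theorem mainTheorem6 (F G : graph) (hFG : hom_to F G) :
  HDE_le F G (INR #|vert F| / INR #|vert G|)%R /\
  HDE_le F G (INR (CC F) / INR (CC G))%R /\
  ((1 <= alpha G)%N -> HDE_le F G (INR (alpha F) / INR (alpha G))%R).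
Proof.
split; [|split].
- move=> c Hc.
  apply: (key #|vert G| #|vert F| 1 c (fun N => hom G (Kn N)) (fun N => hom F (Kn N))).
  + exact: vert_nonempty.
  + by move=> N; rewrite hom_Kn.
  + by move=> N; rewrite hom_Kn mul1n.
  + by move=> N; apply: Hc.
- move=> c Hc.
  apply: (key (CC G) (CC F) 1 c (fun N => hom G (Loops N)) (fun N => hom F (Loops N))).
  + exact: CC_pos.
  + by move=> N; rewrite hom_Loops.
  + by move=> N; rewrite hom_Loops mul1n.
  + by move=> N; apply: Hc.
- move=> Ha c Hc.
  apply: (key (alpha G) (alpha F) (expn 2 #|vert F| * expn 2 (alpha F)) c
                (fun N => hom G (Star N)) (fun N => hom F (Star N))).
  + exact: Ha.
  + by move=> N; apply: alpha_lower.
  + by move=> N; apply: alpha_upper.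
  + by move=> N; apply: Hc.
Qed.
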